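(* Let $X=\{x_j:j\in J\}\subset\mathbb{R}^2$ be a finite set with $n=|J|$, and let $\mathcal{D}$ be any farthest point Delaunay triangulation of $X$. A point $s\in\mathbb{R}^2$ is the (quadratic) min-power centre of $X$ if and only if there is a face $D$ of $\mathcal{D}$ (a vertex, an edge, or a triangle) such that $s\in\mathrm{int}(T(D))$ and $s\in V_D$.
   Context: For $s\in\mathbb{R}^2$ let $P(s)=\sum_{i\in J}\|s-x_i\|^2+\max_{i\in J}\|s-x_i\|^2$ (Euclidean norm). The min-power centre $s^*$ of $X$ is the unique minimiser of $P$. Let $M=\frac1n\sum_{i\in J}x_i$ be the centroid, and let $T:\mathbb{R}^2\to\mathbb{R}^2$ be the homothety $T(y)=\frac{1}{n+1}(y+nM)$; thus $T(x_j)=M_j:=\frac{1}{n+1}\big(x_j+\sum_{i\in J}x_i\big)$. The farthest point Voronoi diagram of $X$ partitions the plane into regions $V(x_j)=\{s:\|s-x_j\|=\max_{i\in J}\|s-x_i\|\}$. A farthest point Delaunay triangulation of $X$ is a triangulation of (the extreme points of) $X$ such that the circumcircle of every triangle encloses all points of $X$; it is dual to the farthest point Voronoi diagram. For a face $D$ of $\mathcal{D}$ with vertex index set $J_D$, its dual face is $V_D=\bigcap_{j\in J_D}V(x_j)$. $\mathrm{int}(\cdot)$ denotes relative interior of a face, with the convention $\mathrm{int}(\{x\})=\{x\}$ for a single point. *)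

(* Defs.v *)
From HB Require Import structures.
From mathcomp Require Import all_boot all_order all_algebra.
From mathcomp Require Import reals.
Set Implicit Arguments. Unset Strict Implicit. Unset Printing Implicit Defensive.
Import Order.TTheory GRing.Theory Num.Theory.
Local Open Scope ring_scope.

Section Defs.
Variable R : realType.
Notation pt := 'rV[R]_2.

Definition sqdist (p q : pt) : R := \sum_(k < 2) (p ord0 k - q ord0 k) ^+ 2.

Definition hull (S : pt -> Prop) (p : pt) : Prop :=
  exists (m : nat) (z : 'I_m -> pt) (mu : 'I_m -> R),
    [/\ forall i, S (z i), forall i, 0 <= mu i, \sum_i mu i = 1
      & p = \sum_i mu i *: z i].

Definition aff (S : pt -> Prop) (p : pt) : Prop :=
  exists (m : nat) (z : 'I_m -> pt) (mu : 'I_m -> R),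
    [/\ forall i, S (z i), \sum_i mu i = 1 & p = \sum_i mu i *: z i].

(* relative interior of a set: points having a neighbourhood,
   within the affine hull, contained in the set.  For a singleton
   this is the point itself. *)
Definition relint (S : pt -> Prop) (p : pt) : Prop :=
  S p /\ exists e : R, 0 < e /\
    forall q, aff S q -> sqdist p q < e ^+ 2 -> S q.

Definition image_set (f : pt -> pt) (S : pt -> Prop) (p : pt) : Prop :=
  exists q, S q /\ p = f q.

Variable n : nat.
Variable x : 'I_n -> pt.

Definition pts (A : {set 'I_n}) (p : pt) : Prop := exists2 j, j \in A & p = x j.

Definition face_set (A : {set 'I_n}) : pt -> Prop := hull (pts A).

Definition extreme (j : 'I_n) : Prop :=
  ~ hull (fun p => exists2 i, i != j & p = x i) (x j).

Definition aff_indep (A : {set 'I_n}) : Prop :=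
  forall mu : 'I_n -> R,
    (forall i, i \notin A -> mu i = 0) ->
    \sum_i mu i = 0 -> \sum_i mu i *: x i = 0 ->
    forall i, mu i = 0.

(* F is a triangulation of the extreme points of X, given as a
   (geometric) simplicial complex by the vertex index sets of its faces *)
Definition triangulation (F : {set {set 'I_n}}) : Prop :=
  [/\ (forall A, A \in F -> (1 <= #|A| <= 3)%N /\ aff_indep A),
      (forall A B : {set 'I_n}, A \in F -> B \subset A -> B != set0 -> B \in F),
      (forall j, [set j] \in F <-> extreme j),
      (forall p, hull (fun q => exists2 j, extreme j & q = x j) p <->
                 exists2 A, A \in F & face_set A p)
    & (forall A B p, A \in F -> B \in F -> face_set A p -> face_set B p ->
                     face_set (A :&: B) p)].

Definition farthest_delaunay (F : {set {set 'I_n}}) : Prop :=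
  triangulation F /\
  forall A, A \in F -> #|A| = 3 ->
    exists (c : pt) (r : R),
      (forall j, j \in A -> sqdist c (x j) = r) /\
      (forall i, sqdist c (x i) <= r).

(* max_i ||s - x_i||^2 (all terms are nonnegative, 0 is a neutral element) *)
Definition maxdist (s : pt) : R := \big[Num.max/0]_i sqdist s (x i).

Definition P (s : pt) : R := \sum_i sqdist s (x i) + maxdist s.

Definition minpower_centre (s : pt) : Prop := forall t, P s <= P t.

Definition centroid : pt := (n%:R)^-1 *: \sum_i x i.
Definition T (y : pt) : pt := (n.+1%:R)^-1 *: (y + n%:R *: centroid).

Definition Vreg (j : 'I_n) (s : pt) : Prop := sqdist s (x j) = maxdist s.
Definition VD (A : {set 'I_n}) (s : pt) : Prop := forall j, j \in A -> Vreg j s.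

End Defs.

(* Main.v *)
Require Import Defs.
From HB Require Import structures.
From mathcomp Require Import all_boot all_order all_algebra.
From mathcomp Require Import reals.
From mathcomp Require Import ring lra.
From mathcomp Require Import boolp classical_sets topology normedtype derive sequences.
Import Order.TTheory GRing.Theory Num.Theory.
Import numFieldTopology.Exports numFieldNormedType.Exports.
Local Open Scope ring_scope.
Set Implicit Arguments. Unset Strict Implicit. Unset Printing Implicit Defensive.

Notation r0 := (@ord0 0).
Notation i0 := (@ord0 1).
Notation i1 := (@ord_max 1).

Section Basic.
Variable R : realType.
Notation pt := 'rV[R]_2.
Implicit Types p q : pt.

Lemma sqdistE p q : sqdist p q = (p r0 i0 - q r0 i0)^+2 + (p r0 i1 - q r0 i1)^+2.
Proof.
rewrite /sqdist big_ord_recr big_ord_recr big_ord0 /= add0r.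
by have -> : widen_ord (leqnSn 1) ord_max = i0 by apply: val_inj.
Qed.

Lemma ptP p q : p r0 i0 = q r0 i0 -> p r0 i1 = q r0 i1 -> p = q.
Proof.
move=> h0 h1; apply/rowP => j; case: j => [[|[|//]] Hj].
  by rewrite (_ : Ordinal Hj = i0) //; apply: val_inj.
by rewrite (_ : Ordinal Hj = i1) //; apply: val_inj.
Qed.

Lemma sqdist_ge0 p q : 0 <= sqdist p q.
Proof. by rewrite sqdistE addr_ge0 // sqr_ge0. Qed.

Lemma sqdistC p q : sqdist p q = sqdist q p.
Proof. by rewrite !sqdistE; ring. Qed.

Lemma sqdist_eq0 p q : sqdist p q = 0 -> p = q.
Proof.
rewrite sqdistE => h.
have h0 : (p r0 i0 - q r0 i0)^+2 = 0.
  apply/eqP; rewrite eq_le sqr_ge0 andbT; rewrite -h lerDl sqr_ge0 //.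
have h1 : (p r0 i1 - q r0 i1)^+2 = 0 by rewrite -h h0 add0r.
apply: ptP; apply/eqP; rewrite -subr_eq0 -sqrf_eq0; apply/eqP => //.
Qed.

Lemma coordZsum (I : finType) (mu : I -> R) (z : I -> pt) k :
  (\sum_i mu i *: z i) r0 k = \sum_i mu i * z i r0 k.
Proof. by rewrite summxE; apply: eq_bigr => i _; rewrite mxE. Qed.

Lemma var1 (I : finType) (nu z : I -> R) a :
  \sum_i nu i = 1 ->
  \sum_i nu i * (a - z i)^+2 =
  (a - \sum_i nu i * z i)^+2 + \sum_i nu i * (\sum_j nu j * z j - z i)^+2.
Proof.
move=> h1; set c := \sum_j nu j * z j.
have -> : \sum_i nu i * (a - z i) ^+ 2 =
   \sum_i (nu i * ((a - c) * (a + c)) - 2 * (a - c) * (nu i * z i))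
   + \sum_i nu i * (c - z i) ^+ 2.
  rewrite -big_split /=; apply: eq_bigr => i _; ring.
rewrite big_split /= -mulr_suml h1 sumrN -mulr_sumr -/c; congr (_ + _); ring.
Qed.

Lemma var2 (I : finType) (nu : I -> R) (z : I -> pt) s :
  \sum_i nu i = 1 ->
  \sum_i nu i * sqdist s (z i) =
  sqdist s (\sum_i nu i *: z i) + \sum_i nu i * sqdist (\sum_j nu j *: z j) (z i).
Proof.
move=> h1.
have E : forall t, \sum_i nu i * sqdist t (z i) =
   \sum_i nu i * (t r0 i0 - z i r0 i0)^+2 + \sum_i nu i * (t r0 i1 - z i r0 i1)^+2.
  by move=> t; rewrite -big_split; apply: eq_bigr => i _; rewrite sqdistE mulrDr.
rewrite (E s) (var1 (fun i => z i r0 i0) (s r0 i0) h1) (var1 (fun i => z i r0 i1) (s r0 i1) h1).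
rewrite E sqdistE !coordZsum; ring.
Qed.

End Basic.

Section Hull.
Variable R : realType.
Variable n : nat.
Variable x : 'I_n -> 'rV[R]_2.
Notation pt := 'rV[R]_2.

Lemma weights_of_hull (Q : 'I_n -> Prop) p :
  hull (fun p => exists2 j, Q j & p = x j) p ->
  exists nu : 'I_n -> R, [/\ forall i, nu i != 0 -> Q i, forall i, 0 <= nu i,
     \sum_i nu i = 1 & p = \sum_i nu i *: x i].
Proof.
case=> m [z [mu [HS Hmu Hs ->]]].
have : forall k, exists j, Q j /\ z k = x j.
  by move=> k; case: (HS k) => j ? ?; exists j.
case/choice => f Hf.
exists (fun i => \sum_(k | f k == i) mu k); split.
- move=> i Hi; case: (pickP (fun k => f k == i)) => [k /eqP <- | H].
    by case: (Hf k).
  by move: Hi; rewrite big_pred0 ?eqxx.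
- by move=> i; apply: sumr_ge0.
- by rewrite -Hs (partition_big f xpredT) //.
- rewrite (partition_big f xpredT) //=; apply: eq_bigr => i _.
  rewrite scaler_suml; apply: eq_bigr => k /eqP fk.
  by case: (Hf k) => _ ->; rewrite fk.
Qed.

Lemma hull_of_weights (Q : 'I_n -> Prop) (nu : 'I_n -> R) :
  (forall i, nu i != 0 -> Q i) -> (forall i, 0 <= nu i) -> \sum_i nu i = 1 ->
  hull (fun p => exists2 j, Q j & p = x j) (\sum_i nu i *: x i).
Proof.
move=> HQ Hge Hs.
have [i0 Hi0] : exists i, nu i != 0.
  case: (pickP (fun i => nu i != 0)) => [i Hi|H]; first by exists i.
  move: Hs; rewrite big1; last by move=> i _; move: (H i) => /negbFE/eqP.
  by move/eqP; rewrite eq_sym oner_eq0.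
exists n, (fun i => if nu i != 0 then x i else x i0), nu; split => //.
- by move=> i; case: ifP => h; [exists i | exists i0] => //; apply: HQ.
- apply: eq_bigr => i _; case: ifP => // /negbFE/eqP ->; by rewrite !scale0r.
Qed.

Lemma le_maxdist s i : sqdist s (x i) <= maxdist x s.
Proof. exact: le_bigmax. Qed.

Lemma maxdist_ge0 s : 0 <= maxdist x s.
Proof.
rewrite /maxdist; elim/big_ind: _ => //; last by move=> i _; apply: sqdist_ge0.
by move=> a b ha hb; rewrite le_max ha.
Qed.

Lemma maxdist_attained s : (0 < n)%N -> exists j, maxdist x s = sqdist s (x j).
Proof.
move=> n0.
rewrite /maxdist.
have [j _ ->] := @eq_bigmax _ _ _ 0 (Ordinal n0) xpredT (fun i => sqdist s (x i)) isT
   (fun i _ => sqdist_ge0 _ _).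
by exists j.
Qed.

End Hull.

Section Suff.
Variable R : realType.
Variable n : nat.
Variable x : 'I_n -> 'rV[R]_2.
Notation pt := 'rV[R]_2.
Hypothesis n0 : (0 < n)%N.

Lemma sum_sqdist_centroid t :
  \sum_i sqdist t (x i) =
  n%:R * (sqdist t (centroid x) + \sum_i n%:R^-1 * sqdist (centroid x) (x i)).
Proof.
have hn : n%:R != 0 :> R by rewrite pnatr_eq0 -lt0n.
have hw : \sum_(i < n) n%:R^-1 = 1 :> R.
  by rewrite sumr_const card_ord -(mulr_natr (n%:R^-1)) mulVf.
have hc : centroid x = \sum_i n%:R^-1 *: x i by rewrite /centroid scaler_sumr.
by rewrite hc -(var2 x t hw) -mulr_sumr mulrA divff // mul1r.
Qed.

Lemma suff_min (s c : pt) (nu : 'I_n -> R) :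
  (forall i, nu i != 0 -> sqdist s (x i) = maxdist x s) ->
  (forall i, 0 <= nu i) -> \sum_i nu i = 1 -> c = \sum_i nu i *: x i ->
  s = T x c -> minpower_centre x s.
Proof.
move=> Hact Hge Hs Hc HT t.
have hm : forall u, \sum_i nu i * sqdist u (x i) = sqdist u c + \sum_i nu i * sqdist c (x i).
  by move=> u; rewrite (var2 x u Hs) -Hc.
have h2 : sqdist t c + \sum_i nu i * sqdist c (x i) <= maxdist x t.
  rewrite -hm; apply: le_trans (_ : \sum_i nu i * maxdist x t <= _).
    by apply: ler_sum => i _; apply: ler_wpM2l => //; apply: le_maxdist.
  by rewrite -mulr_suml Hs mul1r.
have h3 : maxdist x s = sqdist s c + \sum_i nu i * sqdist c (x i).
  rewrite -hm -[maxdist x s]mul1r -Hs mulr_suml; apply: eq_bigr => i _.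
  by case: (eqVneq (nu i) 0) => [->|/Hact ->]; rewrite ?mul0r.
have key : n%:R * sqdist t (centroid x) + sqdist t c -
           (n%:R * sqdist s (centroid x) + sqdist s c) = n.+1%:R * sqdist t s.
  have hn1 : n.+1%:R != 0 :> R by rewrite pnatr_eq0.
  have e0 : s r0 i0 = n.+1%:R^-1 * (c r0 i0 + n%:R * centroid x r0 i0).
    by rewrite HT /T !mxE.
  have e1 : s r0 i1 = n.+1%:R^-1 * (c r0 i1 + n%:R * centroid x r0 i1).
    by rewrite HT /T !mxE.
  rewrite !sqdistE e0 e1 -natr1; field.
  by rewrite natr1.
rewrite /P !sum_sqdist_centroid h3.
have : 0 <= n.+1%:R * sqdist t s by rewrite mulr_ge0 ?sqdist_ge0.
rewrite -key; lra.
Qed.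

End Suff.

Definition dotp (R : realType) (d p : 'rV[R]_2) := d r0 i0 * p r0 i0 + d r0 i1 * p r0 i1.

Section FO.
Variables (R : realType) (n : nat) (x : 'I_n -> 'rV[R]_2).
Notation pt := 'rV[R]_2.
Definition qpt (s : pt) : pt := n.+1%:R *: s - \sum_i x i.

Lemma sqdist_shift (s d y : pt) e :
  sqdist (s + e *: d) y = sqdist s y + 2 * e * dotp d (s - y) + e^+2 * dotp d d.
Proof. rewrite !sqdistE /dotp !mxE; ring. Qed.

Lemma dotp_q s d j :
  dotp d (qpt s - x j) = \sum_i dotp d (s - x i) + dotp d (s - x j).
Proof.
rewrite /dotp /qpt !mxE !summxE.
rewrite [in RHS](eq_bigr (fun i => d r0 i0 * (s r0 i0 - x i r0 i0) + d r0 i1 * (s r0 i1 - x i r0 i1))); last by move=> i _; rewrite !mxE.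
rewrite big_split /= -!mulr_sumr !sumrB !sumr_const !card_ord -natr1.
ring.
Qed.

Hypothesis n0 : (0 < n)%N.

Lemma first_order s : minpower_centre x s ->
  forall d : pt, exists j, sqdist s (x j) = maxdist x s /\ 0 <= dotp d (qpt s - x j).
Proof.
move=> Hmin d; apply: contrapT => Hn.
set M := maxdist x s.
pose act := fun j => sqdist s (x j) == M.
have Hneg : forall j, act j -> dotp d (qpt s - x j) < 0.
  move=> j /eqP hj; rewrite ltNge; apply/negP => h; apply: Hn; by exists j.
pose del := \big[Num.max/-1]_(j | act j) dotp d (qpt s - x j).
have del_lt0 : del < 0.
  apply/bigmax_ltP; split; [by rewrite ltrN10 | by move=> j; apply: Hneg].
have del_ge : forall j, act j -> dotp d (qpt s - x j) <= del.
  by move=> j hj; apply: le_bigmax_cond.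
pose gam := \big[Num.min/1]_(j | ~~ act j) (M - sqdist s (x j)).
have gam_gt0 : 0 < gam.
  apply/bigmin_gtP; split => // j hj.
  by rewrite subr_gt0 lt_neqAle hj le_maxdist.
have gam_le1 : gam <= 1 by rewrite /gam bigmin_idl ge_min lexx.
have gam_le : forall j, ~~ act j -> gam <= M - sqdist s (x j).
  by move=> j hj; apply: bigmin_le_cond.
pose B := \sum_i `|2 * dotp d (s - x i)|.
have B_ge : forall i, 2 * dotp d (s - x i) <= B.
  move=> i; apply: le_trans (ler_norm _) _.
  by rewrite /B (bigD1 i) //= lerDl sumr_ge0.
pose Sd := \sum_i dotp d (s - x i).
have dd_ge0 : 0 <= dotp d d by rewrite /dotp -!expr2 addr_ge0 ?sqr_ge0.
have B_ge0 : 0 <= B by rewrite sumr_ge0.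
have nd_ge0 : 0 <= n.+1%:R * dotp d d by rewrite mulr_ge0.
have Sd_le : 2 * Sd <= `|2 * Sd| by apply: ler_norm.
have Sd_ge0 : 0 <= `|2 * Sd| by apply: normr_ge0.
pose K := 1 + B + `|2 * Sd| + n.+1%:R * dotp d d.
have K_ge1 : 1 <= K by rewrite /K; lra.
have K_gt0 : 0 < K by lra.
pose eta := Num.min gam (- del).
have eta_gt0 : 0 < eta by rewrite lt_min gam_gt0 oppr_gt0.
have eta_le_gam : eta <= gam by rewrite ge_min lexx.
have eta_le_del : eta <= - del by rewrite ge_min lexx orbT.
pose e := eta / (4 * K).
have e_gt0 : 0 < e by rewrite divr_gt0 // mulr_gt0.
have eK : e * K = eta / 4.
  rewrite /e; field; rewrite gt_eqF //.
have e_le : e <= e * K by rewrite ler_peMr // ltW.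
have hsum : \sum_i sqdist (s + e *: d) (x i) =
    \sum_i sqdist s (x i) + 2 * e * Sd + n%:R * (e^+2 * dotp d d).
  rewrite (eq_bigr _ (fun i _ => sqdist_shift s d (x i) e)) !big_split /=.
  by rewrite -mulr_sumr sumr_const card_ord -/Sd !mulr_natl.
have [j0 hj0] := maxdist_attained x (s + e *: d) n0.
have := Hmin (s + e *: d); rewrite /P hsum hj0 sqdist_shift -/M.
have hq := dotp_q s d j0; rewrite -/Sd in hq.
have e2K : e * (e * K) <= e * (eta / 4) by rewrite eK.
case: (boolP (act j0)) => hact.
- have h1 := del_ge _ hact; rewrite hq in h1.
  move: hact => /eqP ->.
  have h2 : e^+2 * (n.+1%:R * dotp d d) <= e * (e * K).
    rewrite expr2 -mulrA; apply: ler_wpM2l; first exact: ltW.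
    apply: ler_wpM2l; first exact: ltW. rewrite /K; lra.
  rewrite -natr1 in h2.
  have h3 : e * (2 * (Sd + dotp d (s - x j0))) <= e * (2 * del).
    by apply: ler_wpM2l; [exact: ltW | lra].
  have h4 : e * (eta / 4) <= e * (- del / 4).
    by apply: ler_wpM2l; [exact: ltW | lra].
  have h5 : 0 < e * (- del) by rewrite mulr_gt0 // oppr_gt0.
  nra.
- have h1 := gam_le _ hact.
  have h2 : e * (2 * dotp d (s - x j0)) <= e * B.
    by apply: ler_wpM2l; [exact: ltW | apply: B_ge].
  have h3 : e * (2 * Sd) <= e * `|2 * Sd|.
    by apply: ler_wpM2l; [exact: ltW | lra].
  have h4 : e^+2 * (n.+1%:R * dotp d d) <= e * (e * K).
    rewrite expr2 -mulrA; apply: ler_wpM2l; first exact: ltW.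
    apply: ler_wpM2l; first exact: ltW. rewrite /K; lra.
  rewrite -natr1 in h4.
  have h5 : e * K = e + e * B + e * `|2 * Sd| + e * (n.+1%:R * dotp d d).
    by rewrite /K; ring.
  have h6 : e * (eta / 4) <= eta / 4 * (eta / 4).
    by rewrite mulrC; apply: ler_wpM2l; lra.
  have h7 : eta / 4 * (eta / 4) <= eta / 4 * (1 / 4).
    by apply: ler_wpM2l; lra.
  rewrite -natr1 in h5.
  nra.
Qed.

End FO.

Section Top.
Local Open Scope classical_set_scope.
Variable R : realType.

Lemma cont_sum_seq (T : topologicalType) (I : Type) (s : seq I) (f : I -> T -> R) :
  (forall i, continuous (f i)) -> continuous (fun t => \sum_(i <- s) f i t).
Proof.
move=> hf; elim: s => [|a s IH].
  under eq_fun do rewrite big_nil; exact: cst_continuous.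
under eq_fun do rewrite big_cons.
by move=> t; apply: continuousD; [apply: hf | apply: IH].
Qed.

Lemma cont_lin n (a : 'I_n -> R) :
  continuous (fun v : 'rV[R]_n => \sum_i v r0 i * a i).
Proof.
apply: cont_sum_seq => i t; apply: continuousM; first exact: coord_continuous.
exact: cst_continuous.
Qed.

Definition simplex n (Y : pred 'I_n) (v : 'rV[R]_n) : Prop :=
  [/\ forall i, 0 <= v r0 i, forall i, ~~ Y i -> v r0 i = 0 & \sum_i v r0 i = 1].

Lemma simplex_min n (Y : pred 'I_n) (Phi : 'rV[R]_n -> R) :
  (exists j, Y j) -> continuous Phi ->
  exists2 v, simplex Y v & forall w, simplex Y w -> Phi v <= Phi w.
Proof.
move=> [j Yj] cPhi.
pose S := [set v | simplex Y v].
have S0 : S !=set0.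
  exists (\row_i (i == j)%:R); split.
  - by move=> i; rewrite mxE ler0n.
  - by move=> i hi; rewrite mxE; case: eqP => // e; move: hi; rewrite e Yj.
  - rewrite (bigD1 j) //= mxE eqxx big1 ?addr0 // => i hi; by rewrite mxE (negbTE hi).
have cS : closed S.
  have -> : S = \bigcap_(i in [set: 'I_n]) [set v | 0 <= v r0 i] `&`
               \bigcap_(i in [set i | ~~ Y i]) [set v | v r0 i = 0] `&`
               [set v | \sum_i v r0 i = 1].
    apply/seteqP; split => v.
      case=> h1 h2 h3; split => //; split => i /=.
        by move=> _; apply: h1.
      by apply: h2.
    case=> -[h1 h2] h3; split => //.
      by move=> i; apply: h1.
  apply: closedI; first apply: closedI.
  - apply: closed_bigI => i _.
    apply: (@preimage_closed _ _ (fun v : 'rV[R]_n => v r0 i) [set r | 0 <= r]).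
      by move=> v _; apply: coord_continuous.
    exact: closed_ge.
  - apply: closed_bigI => i _.
    apply: (@preimage_closed _ _ (fun v : 'rV[R]_n => v r0 i) [set r | r = 0]).
      by move=> v _; apply: coord_continuous.
    exact: closed_eq.
  - apply: (@preimage_closed _ _ (fun v : 'rV[R]_n => \sum_i v r0 i) [set r | r = 1]).
      move=> v _; apply: cont_sum_seq => i; exact: coord_continuous.
    exact: closed_eq.
have kS : compact S.
  have kB := @rV_compact R n (fun _ => `[0, 1]%classic) (fun _ => @segment_compact _ 0 1).
  apply: (subclosed_compact cS kB).
  move=> v [h1 h2 h3] i /=; rewrite in_itv /= h1 /= -h3.
  by rewrite (bigD1 i) //= lerDl sumr_ge0.
have cw : {within S, continuous Phi} by apply: continuous_subspaceT.
have [v Sv hv] := EVT_min_rV S0 kS cw.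
exists v; first by move: Sv; rewrite inE.
by move=> w Sw; apply: hv; rewrite inE.
Qed.

End Top.

Section Sep.
Variables (R : realType) (n : nat) (x : 'I_n -> 'rV[R]_2).
Notation pt := 'rV[R]_2.

Lemma comb_coord (v : 'rV[R]_n) t j k :
  \sum_i ((1 - t) * v r0 i + t * (i == j)%:R) * x i r0 k =
  (1 - t) * (\sum_i v r0 i * x i r0 k) + t * x j r0 k.
Proof.
under eq_bigr do rewrite mulrDl.
rewrite big_split /=; congr (_ + _).
  by rewrite mulr_sumr; apply: eq_bigr => i _; rewrite mulrA.
rewrite (bigD1 j) //= eqxx mulr1 big1 ?addr0 // => i /negbTE ->.
by rewrite mulr0 mul0r.
Qed.

Lemma in_hull_of_dir (Y : pred 'I_n) (q : pt) :
  (exists j, Y j) ->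
  (forall d, exists j, Y j /\ 0 <= dotp d (q - x j)) ->
  exists nu : 'I_n -> R, [/\ forall i, nu i != 0 -> Y i, forall i, 0 <= nu i,
     \sum_i nu i = 1 & q = \sum_i nu i *: x i].
Proof.
move=> Yne Hd.
pose Phi (v : 'rV[R]_n) := sqdist (\sum_i v r0 i *: x i) q.
have eqPhi : Phi = fun v =>
   (\sum_i v r0 i * x i r0 i0 - q r0 i0) * (\sum_i v r0 i * x i r0 i0 - q r0 i0) +
   (\sum_i v r0 i * x i r0 i1 - q r0 i1) * (\sum_i v r0 i * x i r0 i1 - q r0 i1).
  by apply/funext => v; rewrite /Phi sqdistE !coordZsum !expr2.
have cPhi : continuous Phi.
  have c0 : forall (a : 'I_n -> R) (b : R), continuous (fun v : 'rV[R]_n => \sum_i v r0 i * a i - b).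
    move=> a b v; apply: continuousB; [apply: cont_lin | apply: cst_continuous].
  have c1 : forall (a : 'I_n -> R) (b : R), continuous (fun v : 'rV[R]_n => (\sum_i v r0 i * a i - b) * (\sum_i v r0 i * a i - b)).
    by move=> a b v; exact: (continuousM (c0 a b v) (c0 a b v)).
  rewrite eqPhi => v.
  exact: (continuousD (c1 (fun i => x i r0 i0) (q r0 i0) v) (c1 (fun i => x i r0 i1) (q r0 i1) v)).
have [v [h1 h2 h3] hv] := simplex_min Yne cPhi.
set c := \sum_i v r0 i *: x i.
have cE : forall k, c r0 k = \sum_i v r0 i * x i r0 k by move=> k; apply: coordZsum.
have var : forall j, Y j -> 0 <= dotp (x j - c) (c - q).
  move=> j Yj; rewrite leNgt; apply/negP => alt0.
  set a := dotp (x j - c) (c - q) in alt0.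
  set b := sqdist (x j) c.
  have b0 : 0 <= b by apply: sqdist_ge0.
  pose t := Num.min 1 (- a / (b + 1)).
  have t_gt0 : 0 < t by rewrite lt_min ltr01 divr_gt0 // ?oppr_gt0 // ltr_wpDl.
  have t_le1 : t <= 1 by rewrite ge_min lexx.
  have t_le : t * (b + 1) <= - a.
    rewrite -ler_pdivlMr ?ltr_wpDl //; by rewrite ge_min lexx orbT.
  pose w := \row_i ((1 - t) * v r0 i + t * (i == j)%:R).
  have Sw : simplex Y w.
    split.
    - move=> i; rewrite mxE addr_ge0 // mulr_ge0 // ?subr_ge0 // ltW //.
    - move=> i hi; rewrite mxE h2 // mulr0 add0r.
      by case: eqP => [e|_]; [move: hi; rewrite e Yj | rewrite mulr0].
    - rewrite (eq_bigr (fun i => (1 - t) * v r0 i + t * (i == j)%:R)); last by move=> i _; rewrite mxE.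
      rewrite big_split /= -mulr_sumr h3 mulr1 (bigD1 j) //= eqxx mulr1 big1 ?addr0.
        by rewrite subrK.
      by move=> i /negbTE ->; rewrite mulr0.
  have wE : \sum_i w r0 i *: x i = (1 - t) *: c + t *: x j.
    have wk : forall k, (\sum_i w r0 i *: x i) r0 k = ((1 - t) *: c + t *: x j) r0 k.
      move=> k; rewrite coordZsum.
      rewrite (eq_bigr (fun i => ((1 - t) * v r0 i + t * (i == j)%:R) * x i r0 k)); last by move=> i _; rewrite mxE.
      by rewrite comb_coord -cE !mxE.
    by apply: ptP; apply: wk.
  have := hv w Sw; rewrite /Phi wE -/c !sqdistE !mxE.
  have aE : a = (x j r0 i0 - c r0 i0) * (c r0 i0 - q r0 i0) + (x j r0 i1 - c r0 i1) * (c r0 i1 - q r0 i1).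
    by rewrite /a /dotp !mxE.
  have bE : b = (x j r0 i0 - c r0 i0)^+2 + (x j r0 i1 - c r0 i1)^+2 by rewrite /b sqdistE.
  move=> H.
  have H2 : 0 <= 2 * t * a + t^+2 * b by rewrite aE bE; nra.
  have H3 : t * (t * (b + 1)) <= t * (- a) by rewrite ler_wpM2l // ltW.
  have H4 : 0 < t * (- a) by rewrite mulr_gt0 // oppr_gt0.
  clearbody t a b; clear -H2 H3 H4 b0 t_gt0; nra.
pose d := c - q.
have [j [Yj hj]] := Hd d.
have va := var j Yj.
have hdd : dotp d d <= 0.
  move: hj va; rewrite /d /dotp !mxE => hj va; nra.
move: hdd; rewrite /d /dotp !mxE -!expr2 => hdd.
exists (fun i => v r0 i); split => //.
  by move=> i; apply: contraNT => nY; rewrite h2.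
rewrite -/c.
have e0 : (c r0 i0 - q r0 i0)^+2 = 0.
  apply/eqP; rewrite eq_le sqr_ge0 andbT; move: (sqr_ge0 (c r0 i1 - q r0 i1)) hdd; lra.
have e1 : (c r0 i1 - q r0 i1)^+2 = 0.
  apply/eqP; rewrite eq_le sqr_ge0 andbT; move: (sqr_ge0 (c r0 i0 - q r0 i0)) hdd; lra.
move/eqP: e0; rewrite sqrf_eq0 subr_eq0 => /eqP e0.
move/eqP: e1; rewrite sqrf_eq0 subr_eq0 => /eqP e1.
by apply: ptP.
Qed.

End Sep.

Section Avg.
Variable R : realType.

Lemma avg_le (I : finType) (w f : I -> R) M :
  (forall i, 0 <= w i) -> \sum_i w i = 1 -> (forall i, f i <= M) ->
  \sum_i w i * f i <= M.
Proof.
move=> h0 h1 hf; apply: le_trans (_ : \sum_i w i * M <= _).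
  by apply: ler_sum => i _; apply: ler_wpM2l.
by rewrite -mulr_suml h1 mul1r.
Qed.

Lemma avg_const (I : finType) (w f : I -> R) M :
  \sum_i w i = 1 -> (forall i, w i != 0 -> f i = M) -> \sum_i w i * f i = M.
Proof.
move=> h1 hf; rewrite -[M]mul1r -h1 mulr_suml; apply: eq_bigr => i _.
by case: (eqVneq (w i) 0) => [->|/hf ->]; rewrite ?mul0r.
Qed.

Lemma sum_ge0_eq0 (I : finType) (g : I -> R) i :
  (forall i, 0 <= g i) -> \sum_i g i <= 0 -> g i = 0.
Proof.
move=> h0 hs; apply/eqP; rewrite eq_le h0 andbT.
apply: le_trans hs; rewrite (bigD1 i) //= lerDl sumr_ge0 //.
Qed.

Lemma avg_eq_max (I : finType) (w f : I -> R) M :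
  (forall i, 0 <= w i) -> \sum_i w i = 1 -> (forall i, f i <= M) ->
  M <= \sum_i w i * f i -> forall i, w i != 0 -> f i = M.
Proof.
move=> h0 h1 hf hM i wi.
have : w i * (M - f i) = 0.
  apply: (sum_ge0_eq0 (g := fun i => w i * (M - f i))).
    by move=> j; rewrite mulr_ge0 // subr_ge0.
  have -> : \sum_j w j * (M - f j) = M * \sum_j w j - \sum_j w j * f j.
    rewrite mulr_sumr -sumrB; apply: eq_bigr => j _; ring.
  by rewrite h1 mulr1 subr_le0.
by move/eqP; rewrite mulf_eq0 (negbTE wi) /= subr_eq0 => /eqP.
Qed.

Lemma exists_nz (I : finType) (w : I -> R) : \sum_i w i = 1 -> exists i, w i != 0.
Proof.
move=> h1; case: (pickP (fun i => w i != 0)) => [i Hi|H]; first by exists i.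
move: h1; rewrite big1; last by move=> i _; move: (H i) => /negbFE/eqP.
by move/eqP; rewrite eq_sym oner_eq0.
Qed.

End Avg.

Section Main.
Variables (R : realType) (n : nat) (x : 'I_n -> 'rV[R]_2) (F : {set {set 'I_n}}).
Notation pt := 'rV[R]_2.
Hypothesis n0 : (0 < n)%N.
Hypothesis injx : injective x.
Hypothesis HF : farthest_delaunay x F.

Lemma active_extreme s j : (forall i, sqdist s (x i) <= sqdist s (x j)) -> extreme x j.
Proof.
move=> Hmax Hh.
have [nu [Hsup Hge Hs Hxj]] := weights_of_hull Hh.
have := var2 x s Hs; rewrite -Hxj => hv.
have hle : \sum_i nu i * sqdist s (x i) <= sqdist s (x j) by apply: avg_le.
have [i Hi] := exists_nz Hs.
have := Hsup i Hi; apply/negP; rewrite negbK.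
have h0 : nu i * sqdist (x j) (x i) = 0.
  apply: (sum_ge0_eq0 (g := fun i => nu i * sqdist (x j) (x i))).
    by move=> k; rewrite mulr_ge0 // sqdist_ge0.
  move: hle; rewrite hv; have := sqdist_ge0 s (x j); lra.
move/eqP: h0; rewrite mulf_eq0 (negbTE Hi) /= => /eqP /sqdist_eq0 /injx ->.
by [].
Qed.

Lemma key_triangle s c (D : {set 'I_n}) (beta nu : 'I_n -> R) :
  D \in F -> #|D| = 3 ->
  (forall i, beta i != 0 -> i \in D) -> (forall i, 0 <= beta i) ->
  \sum_i beta i = 1 -> c = \sum_i beta i *: x i ->
  (forall i, nu i != 0 -> sqdist s (x i) = maxdist x s) -> (forall i, 0 <= nu i) ->
  \sum_i nu i = 1 -> c = \sum_i nu i *: x i ->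
  forall i, beta i != 0 -> sqdist s (x i) = maxdist x s.
Proof.
move=> DF D3 bs b0 b1 bc ns nn0 n1 nc.
case: HF => _ /(_ D DF D3) [c0 [r [hr hle]]].
set M := maxdist x s.
have vb0 := var2 x c0 b1; rewrite -bc in vb0.
have vn0 := var2 x c0 n1; rewrite -nc in vn0.
have vbs := var2 x s b1; rewrite -bc in vbs.
have vns := var2 x s n1; rewrite -nc in vns.
have e1 : \sum_i beta i * sqdist c0 (x i) = r by apply: avg_const => // i /bs /hr.
have e2 : \sum_i nu i * sqdist c0 (x i) <= r by apply: avg_le.
have e3 : \sum_i nu i * sqdist s (x i) = M by apply: avg_const.
have e4 : M <= \sum_i beta i * sqdist s (x i) by lra.
by apply: (avg_eq_max b0 b1 (fun i => le_maxdist x s i) e4).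
Qed.

End Main.

Section Sets.
Variable n : nat.

Lemma sum_supp (V : nmodType) (A : {set 'I_n}) (g : 'I_n -> V) :
  (forall i, i \notin A -> g i = 0) -> \sum_i g i = \sum_(i in A) g i.
Proof.
move=> h; rewrite [RHS]big_mkcond /=; apply: eq_bigr => i _.
by case: ifP => // /negbT /h.
Qed.

Lemma sum_set2 (V : nmodType) a b (g : 'I_n -> V) :
  a != b -> \sum_(i in [set a; b]) g i = g a + g b.
Proof.
move=> ab; rewrite big_setU1 /= ?big_set1 //.
by rewrite !inE.
Qed.

Lemma sum_set3 (V : nmodType) a b k (g : 'I_n -> V) :
  a != b -> a != k -> b != k -> \sum_(i in [set a; b; k]) g i = g a + g b + g k.
Proof.
move=> ab ak bk.
have -> : [set a; b; k] = a |: [set b; k].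
  by apply/setP => i; rewrite !inE orbA.
rewrite big_setU1 /= ?sum_set2 ?addrA //.
by rewrite !inE negb_or ab ak.
Qed.

Lemma card3P (A : {set 'I_n}) : #|A| = 3 ->
  exists a b k, [/\ a != b, a != k, b != k & A = [set a; b; k]].
Proof.
move=> A3.
have [a aA] : exists a, a \in A by apply/card_gt0P; rewrite A3.
have : #|A :\ a| = 2 by move: A3; rewrite (cardsD1 a) aA add1n => -[].
move/eqP/cards2P => -[b [k [bk Ebk]]].
have : b \in A :\ a by rewrite Ebk !inE eqxx.
have : k \in A :\ a by rewrite Ebk !inE eqxx orbT.
rewrite !inE => /andP [ka _] /andP [ba _].
exists a, b, k; split => //; first by rewrite eq_sym.
  by rewrite eq_sym.
rewrite -(finset.setD1K aA) Ebk.
by apply/setP => i; rewrite !inE orbA.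
Qed.

End Sets.

Section CB.
Variables (R : realType) (n : nat) (x : 'I_n -> 'rV[R]_2).
Notation pt := 'rV[R]_2.
Hypothesis injx : injective x.

Lemma nonneg_of_sq (bta th m : R) : 0 < m -> m <= bta -> (bta - th)^+2 <= m^+2 -> 0 <= th.
Proof. move=> h1 h2 h3; rewrite leNgt; apply/negP => h4; nra. Qed.

Lemma supp_zero (A : {set 'I_n}) (th : 'I_n -> R) :
  (forall i, th i != 0 -> i \in A) -> forall i, i \notin A -> th i = 0.
Proof. by move=> h i; apply: contraNeq => /h. Qed.

Lemma sum_suppZ (A : {set 'I_n}) (th : 'I_n -> R) :
  (forall i, i \notin A -> th i = 0) ->
  \sum_i th i *: x i = \sum_(i in A) th i *: x i.
Proof. by move=> h; apply: sum_supp => i /h ->; rewrite scale0r. Qed.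

Definition CBprop (A : {set 'I_n}) (beta : 'I_n -> R) :=
  exists2 E, 0 < E & forall theta : 'I_n -> R, (forall i, theta i != 0 -> i \in A) ->
    \sum_i theta i = 1 ->
    sqdist (\sum_i beta i *: x i) (\sum_i theta i *: x i) < E -> forall i, 0 <= theta i.

Lemma coeff1 a beta : CBprop [set a] beta.
Proof.
exists 1 => // th hth hs _ i.
have hz := supp_zero hth.
move: hs; rewrite (sum_supp hz) big_set1 => ha.
case: (eqVneq i a) => [->|ia]; first by rewrite ha.
by rewrite hz // !inE.
Qed.

Lemma coeff2 a b beta : a != b ->
  (forall i, (i \in [set a; b]) = (beta i != 0)) -> (forall i, 0 <= beta i) ->
  \sum_i beta i = 1 -> CBprop [set a; b] beta.
Proof.
move=> ab hA hb0 hb1.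
have hbz : forall i, i \notin [set a; b] -> beta i = 0.
  by move=> i; rewrite hA negbK => /eqP.
have ba : 0 < beta a by rewrite lt_def -hA !inE eqxx hb0.
have bb : 0 < beta b by rewrite lt_def -hA !inE eqxx orbT hb0.
have sb : beta a + beta b = 1 by rewrite -hb1 (sum_supp hbz) sum_set2.
pose m := Num.min (beta a) (beta b).
have m0 : 0 < m by rewrite lt_min ba bb.
have ma : m <= beta a by rewrite ge_min lexx.
have mb : m <= beta b by rewrite ge_min lexx orbT.
pose L := sqdist (x a) (x b).
have L0 : 0 < L.
  rewrite lt_def sqdist_ge0 andbT; apply/eqP => /sqdist_eq0 /injx e.
  by move: ab; rewrite e eqxx.
exists (m^+2 * L); first by rewrite mulr_gt0 // exprn_gt0.
move=> th hth hs hlt i.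
have hz := supp_zero hth.
have st : th a + th b = 1 by rewrite -hs (sum_supp hz) sum_set2.
move: hlt; rewrite (sum_suppZ hbz) (sum_suppZ hz) !sum_set2 //.
have -> : sqdist (beta a *: x a + beta b *: x b) (th a *: x a + th b *: x b) =
          (beta a - th a)^+2 * L.
  rewrite /L !sqdistE !mxE.
  have -> : beta b = 1 - beta a by lra.
  have -> : th b = 1 - th a by lra.
  ring.
rewrite ltr_pM2r // => hlt.
case: (eqVneq i a) => [->|ia]; first by apply: (nonneg_of_sq m0 ma); apply: ltW.
case: (eqVneq i b) => [->|ib].
  apply: (nonneg_of_sq m0 mb); apply: ltW.
  have -> : beta b - th b = - (beta a - th a) by lra.
  by rewrite sqrrN.
by rewrite hz // !inE negb_or ia ib.
Qed.

Lemma coeff3 a b k beta : a != b -> a != k -> b != k -> aff_indep x [set a; b; k] ->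
  (forall i, (i \in [set a; b; k]) = (beta i != 0)) -> (forall i, 0 <= beta i) ->
  \sum_i beta i = 1 -> CBprop [set a; b; k] beta.
Proof.
move=> ab ak bk hind hA hb0 hb1.
have hbz : forall i, i \notin [set a; b; k] -> beta i = 0.
  by move=> i; rewrite hA negbK => /eqP.
have ba : 0 < beta a by rewrite lt_def -hA !inE eqxx hb0.
have bb : 0 < beta b by rewrite lt_def -hA !inE eqxx orbT hb0.
have bk' : 0 < beta k by rewrite lt_def -hA !inE eqxx !orbT hb0.
have sb : beta a + beta b + beta k = 1 by rewrite -hb1 (sum_supp hbz) sum_set3.
pose m := Num.min (beta a) (Num.min (beta b) (beta k)).
have m0 : 0 < m by rewrite !lt_min ba bb bk'.
have ma : m <= beta a by rewrite ge_min lexx.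
have mb : m <= beta b by rewrite /m !ge_min lexx orbT.
have mk : m <= beta k by rewrite /m !ge_min lexx !orbT.
set xa0 := x a r0 i0. set xa1 := x a r0 i1.
set xb0 := x b r0 i0. set xb1 := x b r0 i1.
set xk0 := x k r0 i0. set xk1 := x k r0 i1.
pose u0 := xa0 - xk0. pose u1 := xa1 - xk1.
pose v0 := xb0 - xk0. pose v1 := xb1 - xk1.
pose D := u0 * v1 - u1 * v0.
have D0 : D != 0.
  apply/eqP => hD.
  have [al [be [nz [e0 e1]]]] : exists al be : R,
      [/\ (al != 0) || (be != 0), al * u0 + be * v0 = 0 & al * u1 + be * v1 = 0].
    case: (boolP ((u0 == 0) && (v0 == 0))) => [/andP [/eqP hu0 /eqP hv0]|h].
      exists v1, (- u1); split.
      - case: (eqVneq u1 0) => hu1; last by rewrite oppr_eq0 hu1 orbT.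
        exfalso; move: ak => /negP; apply; apply/eqP; apply: injx; apply: ptP.
          by apply/eqP; rewrite -subr_eq0 -/xa0 -/xk0; apply/eqP.
        by apply/eqP; rewrite -subr_eq0 -/xa1 -/xk1; apply/eqP.
      - by rewrite hu0 hv0; ring.
      - ring.
    exists v0, (- u0); split.
    - by move: h; rewrite negb_and oppr_eq0 orbC.
    - ring.
    - move: hD; rewrite /D => hD; lra.
  pose mu := fun i => if i == a then al else if i == b then be else if i == k then - (al + be) else 0.
  have muz : forall i, i \notin [set a; b; k] -> mu i = 0.
    move=> i; rewrite !inE !negb_or /mu => /andP [/andP [/negbTE -> /negbTE ->] /negbTE ->].
    by [].
  have ma' : mu a = al by rewrite /mu eqxx.
  have mb' : mu b = be by rewrite /mu eq_sym (negbTE ab) eqxx.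
  have mk' : mu k = - (al + be) by rewrite /mu eq_sym (negbTE ak) eq_sym (negbTE bk) eqxx.
  have h0 := hind mu muz.
  have s0 : \sum_i mu i = 0 by rewrite (sum_supp muz) sum_set3 // ma' mb' mk'; ring.
  have s1 : \sum_i mu i *: x i = 0.
    rewrite (sum_suppZ muz) sum_set3 // ma' mb' mk'.
    apply: ptP; rewrite !mxE -/xa0 -/xa1 -/xb0 -/xb1 -/xk0 -/xk1.
      by move: e0; rewrite /u0 /v0 => e0; lra.
    by move: e1; rewrite /u1 /v1 => e1; lra.
  have := h0 s0 s1 a; have := h0 s0 s1 b; rewrite ma' mb' => hbe hal.
  by move: nz; rewrite hbe hal eqxx.
pose S := u0^+2 + u1^+2 + v0^+2 + v1^+2 + 1.
have S0 : 0 < S by rewrite /S; have := sqr_ge0 u0; have := sqr_ge0 u1; have := sqr_ge0 v0; have := sqr_ge0 v1; lra.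
have DD : 0 < D^+2 by rewrite lt_def sqr_ge0 andbT expf_neq0.
exists (m^+2 * D^+2 / (4 * S)).
  by apply: divr_gt0; [rewrite mulr_gt0 // exprn_gt0 | rewrite mulr_gt0].
move=> th hth hs hlt i.
have hz := supp_zero hth.
have st : th a + th b + th k = 1 by rewrite -hs (sum_supp hz) sum_set3.
move: hlt; rewrite (sum_suppZ hbz) (sum_suppZ hz) !sum_set3 // sqdistE !mxE.
rewrite -/xa0 -/xa1 -/xb0 -/xb1 -/xk0 -/xk1.
pose da := beta a - th a. pose db := beta b - th b.
have dk : beta k - th k = - (da + db) by rewrite /da /db; lra.
pose W0 := da * u0 + db * v0. pose W1 := da * u1 + db * v1.
have -> : beta a * xa0 + beta b * xb0 + beta k * xk0 - (th a * xa0 + th b * xb0 + th k * xk0) = W0.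
  have -> : beta k = 1 - beta a - beta b by lra.
  have -> : th k = 1 - th a - th b by lra.
  by rewrite /W0 /da /db /u0 /v0; ring.
have -> : beta a * xa1 + beta b * xb1 + beta k * xk1 - (th a * xa1 + th b * xb1 + th k * xk1) = W1.
  have -> : beta k = 1 - beta a - beta b by lra.
  have -> : th k = 1 - th a - th b by lra.
  by rewrite /W1 /da /db /u1 /v1; ring.
move=> hlt.
have Wge : 0 <= W0^+2 + W1^+2 by rewrite addr_ge0 ?sqr_ge0.
have ES : m^+2 * D^+2 / (4 * S) * S = m^+2 * D^+2 / 4.
  by field; rewrite gt_eqF.
have iA : (da * D)^+2 <= (W0^+2 + W1^+2) * (v0^+2 + v1^+2).
  have -> : da * D = W0 * v1 - W1 * v0 by rewrite /W0 /W1 /D; ring.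
  have : 0 <= (W0 * v0 + W1 * v1)^+2 by apply: sqr_ge0.
  have -> : (W0^+2 + W1^+2) * (v0^+2 + v1^+2) = (W0 * v1 - W1 * v0)^+2 + (W0 * v0 + W1 * v1)^+2 by ring.
  lra.
have iB : (db * D)^+2 <= (W0^+2 + W1^+2) * (u0^+2 + u1^+2).
  have -> : db * D = u0 * W1 - u1 * W0 by rewrite /W0 /W1 /D; ring.
  have : 0 <= (u0 * W0 + u1 * W1)^+2 by apply: sqr_ge0.
  have -> : (W0^+2 + W1^+2) * (u0^+2 + u1^+2) = (u0 * W1 - u1 * W0)^+2 + (u0 * W0 + u1 * W1)^+2 by ring.
  lra.
have vS : v0^+2 + v1^+2 <= S by rewrite /S; have := sqr_ge0 u0; have := sqr_ge0 u1; lra.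
have uS : u0^+2 + u1^+2 <= S by rewrite /S; have := sqr_ge0 v0; have := sqr_ge0 v1; lra.
have iA2 : (W0^+2 + W1^+2) * (v0^+2 + v1^+2) <= m^+2 * D^+2 / (4 * S) * S.
  by apply: ler_pM => //; [rewrite addr_ge0 ?sqr_ge0 | apply: ltW].
have iB2 : (W0^+2 + W1^+2) * (u0^+2 + u1^+2) <= m^+2 * D^+2 / (4 * S) * S.
  by apply: ler_pM => //; [rewrite addr_ge0 ?sqr_ge0 | apply: ltW].
have ES2 : m^+2 * D^+2 / 4 = (m / 2)^+2 * D^+2 by field.
have hda : da^+2 <= (m / 2)^+2.
  rewrite -(ler_pM2r DD); apply: le_trans (_ : (da * D)^+2 <= _); first by rewrite exprMn.
  by apply: (le_trans iA); apply: (le_trans iA2); rewrite ES ES2.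
have hdb : db^+2 <= (m / 2)^+2.
  rewrite -(ler_pM2r DD); apply: le_trans (_ : (db * D)^+2 <= _); first by rewrite exprMn.
  by apply: (le_trans iB); apply: (le_trans iB2); rewrite ES ES2.
have m2 : 0 < m / 2 by rewrite divr_gt0.
case: (eqVneq i a) => [->|ia].
  by apply: (nonneg_of_sq m2 _ hda); lra.
case: (eqVneq i b) => [->|ib].
  by apply: (nonneg_of_sq m2 _ hdb); lra.
case: (eqVneq i k) => [->|ik].
  apply: (nonneg_of_sq m0 mk); rewrite dk sqrrN.
  have : 0 <= (da - db)^+2 by apply: sqr_ge0.
  move: hda hdb; rewrite !expr2 => hda hdb; nra.
by rewrite hz // !inE !negb_or ia ib ik.
Qed.

Lemma coeff_bound (A : {set 'I_n}) (beta : 'I_n -> R) : (1 <= #|A| <= 3)%N -> aff_indep x A ->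
  (forall i, (i \in A) = (beta i != 0)) -> (forall i, 0 <= beta i) ->
  \sum_i beta i = 1 -> CBprop A beta.
Proof.
move=> hc hind hA hb0 hb1.
have : (#|A| == 1) || (#|A| == 2) || (#|A| == 3).
  by move: hc; case: #|A| => [|[|[|[|?]]]].
case/orP => [/orP [|]|].
- by case/cards1P => a ->; apply: coeff1.
- by case/cards2P => a [b [ab EA]]; move: hA hind; rewrite EA => hA _; apply: coeff2.
- move/eqP/card3P => [a [b [k [ab ak bk EA]]]].
  by move: hA hind; rewrite EA => hA hind; apply: coeff3.
Qed.

End CB.

Section RI.
Variables (R : realType) (n : nat) (x : 'I_n -> 'rV[R]_2).
Notation pt := 'rV[R]_2.
Hypothesis injx : injective x.

Lemma T_coord (c : pt) k :
  T x c r0 k = n.+1%:R^-1 * (c r0 k + n%:R * centroid x r0 k).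
Proof. by rewrite /T !mxE. Qed.

Lemma aff_image_weights (A : {set 'I_n}) q :
  aff (image_set (T x) (face_set x A)) q ->
  exists th : 'I_n -> R, [/\ forall i, th i != 0 -> i \in A, \sum_i th i = 1 &
     q = T x (\sum_i th i *: x i)].
Proof.
case=> m [z [mu [hz hs ->]]].
have : forall k, exists lam : 'I_n -> R,
    (forall i, lam i != 0 -> i \in A) /\ \sum_i lam i = 1 /\ z k = T x (\sum_i lam i *: x i).
  move=> k; case: (hz k) => c [hc ->].
  have [lam [h1 _ h3 h4]] := weights_of_hull hc.
  by exists lam; split => //; split => //; rewrite h4.
case/choice => L HL.
exists (fun i => \sum_k mu k * L k i); split.
- move=> i hi; case: (pickP (fun k => L k i != 0)) => [k hk|H].
    by case: (HL k) => h1 _; apply: h1.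
  move: hi; rewrite big1 ?eqxx // => k _.
  by move: (H k) => /negbFE /eqP ->; rewrite mulr0.
- rewrite exchange_big /= -hs; apply: eq_bigr => k _.
  by rewrite -mulr_sumr; case: (HL k) => _ [-> _]; rewrite mulr1.
- apply: ptP; rewrite coordZsum T_coord coordZsum.
  + rewrite (eq_bigr (fun k => n.+1%:R^-1 * (mu k * \sum_i L k i * x i r0 i0) +
             n.+1%:R^-1 * (n%:R * centroid x r0 i0) * mu k)); last first.
      by move=> k _; case: (HL k) => _ [_ ->]; rewrite T_coord coordZsum; ring.
    rewrite big_split /= -!mulr_sumr hs mulr1 -mulrDr; congr (_ * (_ + _)).
    rewrite (eq_bigr (fun i => \sum_k mu k * L k i * x i r0 i0)); last first.
      by move=> i _; rewrite mulr_suml.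
    rewrite exchange_big /=; apply: eq_bigr => k _; rewrite mulr_sumr.
    by apply: eq_bigr => i _; rewrite mulrA.
  + rewrite (eq_bigr (fun k => n.+1%:R^-1 * (mu k * \sum_i L k i * x i r0 i1) +
             n.+1%:R^-1 * (n%:R * centroid x r0 i1) * mu k)); last first.
      by move=> k _; case: (HL k) => _ [_ ->]; rewrite T_coord coordZsum; ring.
    rewrite big_split /= -!mulr_sumr hs mulr1 -mulrDr; congr (_ * (_ + _)).
    rewrite (eq_bigr (fun i => \sum_k mu k * L k i * x i r0 i1)); last first.
      by move=> i _; rewrite mulr_suml.
    rewrite exchange_big /=; apply: eq_bigr => k _; rewrite mulr_sumr.
    by apply: eq_bigr => i _; rewrite mulrA.
Qed.

Lemma sqdist_T (c c' : pt) : sqdist (T x c) (T x c') = (n.+1%:R^-1)^+2 * sqdist c c'.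
Proof.
rewrite !sqdistE !T_coord.
have hn : n.+1%:R != 0 :> R by rewrite pnatr_eq0.
field; by rewrite addrC natr1.
Qed.

Lemma relint_of_weights (A : {set 'I_n}) (beta : 'I_n -> R) :
  (1 <= #|A| <= 3)%N -> aff_indep x A ->
  (forall i, (i \in A) = (beta i != 0)) -> (forall i, 0 <= beta i) ->
  \sum_i beta i = 1 ->
  relint (image_set (T x) (face_set x A)) (T x (\sum_i beta i *: x i)).
Proof.
move=> hc hind hA hb0 hb1.
have [E E0 HE] := coeff_bound injx hc hind hA hb0 hb1.
split.
  exists (\sum_i beta i *: x i); split => //.
  by apply: (@hull_of_weights _ _ x (fun i => i \in A)) => // i; rewrite hA.
have hn : 0 < n.+1%:R :> R by rewrite ltr0n.
pose k := (n.+1%:R^-1 : R)^+2.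
have k0 : 0 < k by rewrite exprn_gt0 // invr_gt0.
pose e := Num.min 1 (E * k).
have e0 : 0 < e by rewrite lt_min ltr01 mulr_gt0.
have e1 : e <= 1 by rewrite ge_min lexx.
have eE : e <= E * k by rewrite ge_min lexx orbT.
exists e; split => // q hq.
have [th [hth hs ->]] := aff_image_weights hq.
rewrite sqdist_T -/k => hlt.
have hlt2 : sqdist (\sum_i beta i *: x i) (\sum_i th i *: x i) < E.
  have e2 : e^+2 <= e by rewrite expr2 ger_pMl.
  rewrite -(ltr_pM2l k0); apply: (lt_le_trans hlt); rewrite mulrC; lra.
have th0 := HE th hth hs hlt2.
exists (\sum_i th i *: x i); split => //.
by apply: (@hull_of_weights _ _ x (fun i => i \in A)).
Qed.

End RI.

Section Lim.
Local Open Scope classical_set_scope.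
Variables (R : realType) (n : nat) (x : 'I_n -> 'rV[R]_2).
Notation pt := 'rV[R]_2.

Lemma simplex_compact (Y : pred 'I_n) : compact [set v : 'rV[R]_n | simplex Y v].
Proof.
pose S := [set v : 'rV[R]_n | simplex Y v].
have cS : closed S.
  have -> : S = \bigcap_(i in [set: 'I_n]) [set v | 0 <= v r0 i] `&`
               \bigcap_(i in [set i | ~~ Y i]) [set v | v r0 i = 0] `&`
               [set v | \sum_i v r0 i = 1].
    apply/seteqP; split => v.
      case=> h1 h2 h3; split => //; split => i /=.
        by move=> _; apply: h1.
      by apply: h2.
    case=> -[h1 h2] h3; split => //.
    by move=> i; apply: h1.
  apply: closedI; first apply: closedI.
  - apply: closed_bigI => i _.
    apply: (@preimage_closed _ _ (fun v : 'rV[R]_n => v r0 i) [set r | 0 <= r]).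
      by move=> v _; apply: coord_continuous.
    exact: closed_ge.
  - apply: closed_bigI => i _.
    apply: (@preimage_closed _ _ (fun v : 'rV[R]_n => v r0 i) [set r | r = 0]).
      by move=> v _; apply: coord_continuous.
    exact: closed_eq.
  - apply: (@preimage_closed _ _ (fun v : 'rV[R]_n => \sum_i v r0 i) [set r | r = 1]).
      move=> v _; apply: cont_sum_seq => i; exact: coord_continuous.
    exact: closed_eq.
have kB := @rV_compact R n (fun _ => `[0, 1]%classic) (fun _ => @segment_compact _ 0 1).
apply: (subclosed_compact cS kB).
move=> v [h1 h2 h3] i /=; rewrite in_itv /= h1 /= -h3.
by rewrite (bigD1 i) //= lerDl sumr_ge0.
Qed.

Lemma cont_sumV (T : topologicalType) (I : Type) (s : seq I) (f : I -> T -> pt) :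
  (forall i, continuous (f i)) -> continuous (fun t => \sum_(i <- s) f i t).
Proof.
move=> hf; elim: s => [|a s IH].
  under eq_fun do rewrite big_nil; exact: cst_continuous.
under eq_fun do rewrite big_cons.
by move=> t; exact: (continuousD (hf a t) (IH t)).
Qed.

Lemma comb_cont : continuous (fun v : 'rV[R]_n => \sum_i v r0 i *: x i).
Proof.
apply: cont_sumV => i v.
exact: (@continuousZr_tmp R _ _ (fun w : 'rV[R]_n => w r0 i) (x i) v (@coord_continuous R 1 n r0 i v)).
Qed.

Lemma face_image (B : {set 'I_n}) :
  face_set x B = (fun v : 'rV[R]_n => \sum_i v r0 i *: x i) @`
                   [set v | simplex (fun i => i \in B) v].
Proof.
apply/seteqP; split => p.
  move=> hp; have [nu [h1 h2 h3 h4]] := weights_of_hull hp.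
  exists (\row_i nu i).
    split.
    - by move=> i; rewrite mxE.
    - by move=> i hi; rewrite mxE; apply/eqP; apply: contraNT hi => /h1.
    - by rewrite -h3; apply: eq_bigr => i _; rewrite mxE.
  by rewrite h4; apply: eq_bigr => i _; rewrite mxE.
case=> v [h1 h2 h3] <-.
apply: (@hull_of_weights _ _ x (fun i => i \in B) (fun i => v r0 i)) => //.
by move=> i; apply: contraNT => /h2 ->.
Qed.

Lemma face_closed (B : {set 'I_n}) : closed (face_set x B).
Proof.
rewrite face_image; apply: compact_closed; first exact: norm_hausdorff.
apply: continuous_compact; last exact: simplex_compact.
exact: continuous_subspaceT comb_cont.
Qed.

Lemma limit_face (F : {set {set 'I_n}}) (c y : pt) :
  (forall e : R, 0 < e -> e <= 1 -> exists2 B, B \in F & face_set x B (c + e *: (y - c))) ->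
  exists2 B, B \in F & face_set x B c /\
     exists e : R, [/\ 0 < e, e <= 1 & face_set x B (c + e *: (y - c))].
Proof.
move=> H.
pose p (e : R) := c + e *: (y - c).
have pc : continuous p.
  move=> e.
  have h1 : {for e, continuous (fun z : R => z)} by apply: cvg_id.
  have h2 := @continuousZr_tmp R _ R (fun z => z) (y - c) e h1.
  have h3 : {for e, continuous (fun _ : R => c)} by apply: cst_continuous.
  exact: (continuousD h3 h2).
pose E B := p @^-1` face_set x B.
have cE : forall B, closed (E B).
  by move=> B; apply: preimage_closed; [move=> e _; apply: pc | apply: face_closed].
pose good B := `[< exists e : R, [/\ 0 < e, e <= 1 & E B e] >].
pose s := [seq B <- enum F | good B].
pose U := \big[setU/set0]_(B <- s) E B.
have cU : closed U by apply: closed_bigsetU => B _; apply: cE.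
have hU : forall e, 0 < e -> e <= 1 -> U e.
  move=> e e0 e1; have [B BF hB] := H e e0 e1.
  rewrite /U -bigcup_seq; exists B => //=.
  rewrite mem_filter mem_enum BF andbT; apply/asboolP; exists e; split => //.
have U0 : U 0.
  apply: (closed_cvg U cU _ 0 cvg_harmonic).
  apply: nearW => k; apply: hU => /=; first by rewrite invr_gt0 ltr0n.
  by rewrite invf_le1 ?ltr0n // ler1n.
move: U0; rewrite /U -bigcup_seq => -[B /=].
rewrite mem_filter mem_enum => /andP [/asboolP [e [e0 e1 he]] BF] hB0.
exists B => //; split; first by move: hB0; rewrite /E /p /= scale0r addr0.
by exists e; split.
Qed.

End Lim.

Section Final.
Variables (R : realType) (n : nat) (x : 'I_n -> 'rV[R]_2) (F : {set {set 'I_n}}).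
Notation pt := 'rV[R]_2.
Hypothesis n0 : (0 < n)%N.
Hypothesis injx : injective x.
Hypothesis HF : farthest_delaunay x F.

Lemma hull2 j u w (lam : R) : u != j -> w != j -> 0 <= lam -> lam <= 1 ->
  hull (fun p => exists2 i, i != j & p = x i) (lam *: x u + (1 - lam) *: x w).
Proof.
move=> uj wj l0 l1.
exists 2, (fun k : 'I_2 => if k == ord0 then x u else x w),
  (fun k : 'I_2 => if k == ord0 then lam else 1 - lam); split.
- by move=> k; case: ifP => _; [exists u | exists w].
- by move=> k; case: ifP => _ //; rewrite subr_ge0.
- by rewrite !big_ord_recl big_ord0 /= addr0 addrC subrK.
- by rewrite !big_ord_recl big_ord0 /= addr0.
Qed.

Lemma T_qpt s : T x (qpt x s) = s.
Proof.
have hn : n%:R != 0 :> R by rewrite pnatr_eq0 -lt0n.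
have hn1 : n.+1%:R != 0 :> R by rewrite pnatr_eq0.
apply: ptP; rewrite T_coord /qpt /centroid !mxE !summxE; field;
  by rewrite hn /= addrC natr1.
Qed.

Lemma col_ext a b i (t : R) : a != b -> extreme x a -> extreme x b -> extreme x i ->
  x i = x a + t *: (x b - x a) -> i = a \/ i = b.
Proof.
move=> ab ea eb ei hi.
case: (eqVneq i a) => [->|ia]; first by left.
case: (eqVneq i b) => [->|ib]; first by right.
exfalso.
have c0 : x i r0 i0 = x a r0 i0 + t * (x b r0 i0 - x a r0 i0) by rewrite hi !mxE.
have c1 : x i r0 i1 = x a r0 i1 + t * (x b r0 i1 - x a r0 i1) by rewrite hi !mxE.
have t0 : t != 0.
  apply/eqP => t0; have : x i = x a by rewrite hi t0 scale0r addr0.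
  by move/injx => e; rewrite e eqxx in ia.
have t1 : t != 1.
  apply/eqP => t1; have : x i = x b by rewrite hi t1 scale1r addrC subrK.
  by move/injx => e; rewrite e eqxx in ib.
case: (ltrP 0 t) => tp; last first.
  have tn : t < 0 by rewrite lt_neqAle t0 tp.
  have h1t : 0 < 1 - t by lra.
  apply: ea; have -> : x a = (1 - t)^-1 *: x i + (1 - (1 - t)^-1) *: x b.
    apply: ptP; rewrite !mxE ?c0 ?c1; field; by rewrite gt_eqF.
  apply: hull2; try by []; try by rewrite eq_sym.
  - by rewrite invr_ge0 ltW.
  - by rewrite invf_le1 //; lra.
case: (ltrP t 1) => t1'.
  apply: ei; have -> : x i = (1 - t) *: x a + (1 - (1 - t)) *: x b.
    by apply: ptP; rewrite !mxE ?c0 ?c1; ring.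
  apply: hull2; rewrite 1?eq_sym //; lra.
have tg : 1 < t by rewrite lt_neqAle eq_sym t1 t1'.
apply: eb; have -> : x b = t^-1 *: x i + (1 - t^-1) *: x a.
  apply: ptP; rewrite !mxE ?c0 ?c1; field; by rewrite gt_eqF.
apply: hull2; try by []; try by rewrite eq_sym.
- by rewrite invr_ge0 ltW.
- by rewrite invf_le1 //; lra.
Qed.

Lemma comb_vec (nu : 'I_n -> R) (t : R) k :
  \sum_i ((1 - t) * nu i + t * (i == k)%:R) *: x i =
  (1 - t) *: \sum_i nu i *: x i + t *: x k.
Proof.
under eq_bigr do rewrite scalerDl.
rewrite big_split /=; congr (_ + _).
  by rewrite scaler_sumr; apply: eq_bigr => i _; rewrite scalerA.
rewrite (bigD1 k) //= eqxx mulr1 big1 ?addr0 // => i /negbTE ->.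
by rewrite mulr0 scale0r.
Qed.

Lemma conclude s (D : {set 'I_n}) (beta : 'I_n -> R) :
  D \in F -> (forall i, beta i != 0 -> i \in D) -> (forall i, 0 <= beta i) ->
  \sum_i beta i = 1 -> s = T x (\sum_i beta i *: x i) ->
  (forall i, beta i != 0 -> sqdist s (x i) = maxdist x s) ->
  exists2 A, A \in F & relint (image_set (T x) (face_set x A)) s /\ VD x A s.
Proof.
move=> DF hbs hb0 hb1 hs hact.
case: HF => -[Hsz Hsub _ _ _] _.
pose A := [set i | beta i != 0].
have AF : A \in F.
  apply: (Hsub D) => //.
    by apply/fintype.subsetP => i; rewrite inE => /hbs.
  have [i hi] := exists_nz hb1.
  by apply/set0Pn; exists i; rewrite inE.
have [hc hind] := Hsz A AF.
exists A => //; split.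
  rewrite hs; apply: relint_of_weights => // i.
  by rewrite inE.
by move=> j; rewrite inE => hj; apply: hact.
Qed.

Lemma main_dir s : minpower_centre x s ->
  exists2 A, A \in F & relint (image_set (T x) (face_set x A)) s /\ VD x A s.
Proof.
move=> Hmin.
have HF' := HF.
case: HF' => -[Hsz Hsub Hext Hcov Hint] _.
pose act := fun j => sqdist s (x j) == maxdist x s.
have [j0 hj0] := maxdist_attained x s n0.
have [nu [hns hn0 hn1 hnc]] : exists nu : 'I_n -> R,
    [/\ forall i, nu i != 0 -> act i, forall i, 0 <= nu i,
     \sum_i nu i = 1 & qpt x s = \sum_i nu i *: x i].
  apply: in_hull_of_dir; first by exists j0; rewrite /act hj0.
  move=> d; have [j [hj hd]] := first_order n0 Hmin d.
  by exists j; rewrite /act hj eqxx.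
set c := qpt x s in hnc.
have sT : s = T x c by rewrite /c T_qpt.
clearbody c.
have nact : forall i, nu i != 0 -> sqdist s (x i) = maxdist x s.
  by move=> i /hns /eqP.
have next : forall i, nu i != 0 -> extreme x i.
  move=> i /nact hi; apply: (active_extreme injx (s := s)) => k.
  by rewrite hi le_maxdist.
have hc : hull (fun q => exists2 j, extreme x j & q = x j) c.
  by rewrite hnc; apply: hull_of_weights.
have [A0 A0F hA0] := (Hcov c).1 hc.
case: (EM (exists2 D, D \in F & #|D| = 3 /\ face_set x D c)) => [[D DF [D3 hD]]|noT].
  have [beta [hbs hb0 hb1 hbc]] := weights_of_hull hD.
  apply: (conclude DF hbs hb0 hb1); first by rewrite -hbc.
  exact: (key_triangle HF DF D3 hbs hb0 hb1 hbc nact hn0 hn1 hnc).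
have [beta [hbs hb0 hb1 hbc]] := weights_of_hull hA0.
pose A := [set i | beta i != 0].
have hA : forall i, (i \in A) = (beta i != 0) by move=> i; rewrite inE.
have AF : A \in F.
  apply: (Hsub A0) => //.
    by apply/fintype.subsetP => i; rewrite inE => /hbs.
  have [i hi] := exists_nz hb1.
  by apply/set0Pn; exists i; rewrite inE.
have [hcard hind] := Hsz A AF.
have hbz : forall i, i \notin A -> beta i = 0 by move=> i; rewrite hA negbK => /eqP.
have hcA : face_set x A c.
  rewrite hbc; apply: (@hull_of_weights _ _ x (fun i => i \in A)) => // i.
  by rewrite hA.
have : (#|A| = 1)%N \/ (#|A| = 2)%N \/ (#|A| = 3)%N.
  by move: hcard; case: #|A| => [|[|[|[|?]]]]; auto.
case=> [A1|[A2|A3]].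
- move/eqP: A1 => /cards1P [a EA].
  have ba : beta a = 1 by rewrite -hb1 (sum_supp hbz) EA big_set1.
  have ca : c = x a by rewrite hbc (sum_suppZ x hbz) EA big_set1 ba scale1r.
  have ea : extreme x a by apply/(Hext a); rewrite -EA.
  have nua : nu a != 0.
    apply/negP => /eqP nua; apply: ea; rewrite -ca hnc.
    apply: (@hull_of_weights _ _ x (fun i => i != a)) => // i hi.
    by apply/eqP => e; move: hi; rewrite e nua eqxx.
  apply: (conclude A0F hbs hb0 hb1); first by rewrite -hbc.
  by move=> i; rewrite -hA EA inE => /eqP ->; exact: nact.
- move/eqP: A2 => /cards2P [a [b [ab EA]]].
  have ba : 0 < beta a by rewrite lt_def -hA EA !inE eqxx hb0.
  have bb : 0 < beta b by rewrite lt_def -hA EA !inE eqxx orbT hb0.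
  have sb : beta a + beta b = 1 by rewrite -hb1 (sum_supp hbz) EA sum_set2.
  have cab : c = beta a *: x a + beta b *: x b.
    by rewrite hbc (sum_suppZ x hbz) EA sum_set2.
  have ea : extreme x a.
    apply/(Hext a); apply: (Hsub A) => //.
      by rewrite EA finset.sub1set !inE eqxx.
    by apply/set0Pn; exists a; rewrite inE.
  have eb : extreme x b.
    apply/(Hext b); apply: (Hsub A) => //.
      by rewrite EA finset.sub1set !inE eqxx orbT.
    by apply/set0Pn; exists b; rewrite inE.
  have finish : nu a != 0 -> nu b != 0 ->
      exists2 A, A \in F & relint (image_set (T x) (face_set x A)) s /\ VD x A s.
    move=> nua nub; apply: (conclude A0F hbs hb0 hb1); first by rewrite -hbc.
    by move=> i; rewrite -hA EA !inE => /orP [] /eqP ->; exact: nact.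
  case: (EM (forall i, nu i != 0 -> exists t : R, x i = x a + t *: (x b - x a)))
    => [Hcol|Hnc].
  + have hsupp : forall i, nu i != 0 -> (i == a) || (i == b).
      move=> i hi; have [t ht] := Hcol i hi.
      by case: (col_ext ab ea eb (next i hi) ht) => ->; rewrite eqxx ?orbT.
    have nuz : forall i, i \notin [set a; b] -> nu i = 0.
      by move=> i; rewrite !inE => hi; apply/eqP; apply: contraNT hi => /hsupp.
    have sn : nu a + nu b = 1 by rewrite -hn1 (sum_supp nuz) sum_set2.
    have cn : c = nu a *: x a + nu b *: x b by rewrite hnc (sum_suppZ x nuz) sum_set2.
    have eqa : nu a = beta a.
      apply/eqP; apply: contraT => hne.
      have d : nu a - beta a != 0 by rewrite subr_eq0.
      have hnb : nu b = 1 - nu a by lra.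
      have hbb : beta b = 1 - beta a by lra.
      have eab := etrans (esym cn) cab.
      have h0 := congr1 (fun p : pt => p r0 i0) eab.
      have h1 := congr1 (fun p : pt => p r0 i1) eab.
      rewrite /= !mxE hnb hbb in h0 h1.
      have e0 : (nu a - beta a) * (x a r0 i0 - x b r0 i0) = 0 by lra.
      have e1 : (nu a - beta a) * (x a r0 i1 - x b r0 i1) = 0 by lra.
      move/eqP: e0; rewrite mulf_eq0 (negbTE d) /= subr_eq0 => /eqP e0.
      move/eqP: e1; rewrite mulf_eq0 (negbTE d) /= subr_eq0 => /eqP e1.
      have : x a = x b by apply: ptP.
      by move/injx => e; rewrite e eqxx in ab.
    have eqb : nu b = beta b by lra.
    by apply: finish; [rewrite eqa gt_eqF | rewrite eqb gt_eqF].
  + have [k [nuk hk]] : exists k, nu k != 0 /\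
        ~ exists t : R, x k = x a + t *: (x b - x a).
      apply: contrapT => hh; apply: Hnc => i hi; apply: contrapT => hi'.
      by apply: hh; exists i; split.
    pose y := x k.
    have cov : forall e : R, 0 < e -> e <= 1 ->
        exists2 B, B \in F & face_set x B (c + e *: (y - c)).
      move=> e e0 e1; apply: (Hcov _).1.
      have -> : c + e *: (y - c) = \sum_i ((1 - e) * nu i + e * (i == k)%:R) *: x i.
        rewrite comb_vec -hnc /y; apply: ptP; rewrite !mxE; ring.
      apply: hull_of_weights.
      - move=> i; case: (eqVneq i k) => [-> _|ik]; first exact: next.
        rewrite mulr0 addr0 mulf_eq0 negb_or => /andP [_ h]; exact: next.
      - move=> i; rewrite addr_ge0 // mulr_ge0 //; lra.
      - rewrite big_split /= -mulr_sumr hn1 mulr1 (bigD1 k) //= eqxx mulr1 big1 ?addr0.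
          by rewrite subrK.
        by move=> i /negbTE ->; rewrite mulr0.
    have [B BF [hBc [e [e0 e1 hBe]]]] := limit_face cov.
    have sAB : A \subset B.
      have hI := Hint A B c AF BF hcA hBc.
      have [gam [hgs hg0 hg1 hgc]] := weights_of_hull hI.
      have gz : forall i, i \notin A -> gam i = 0.
        move=> i hi; apply/eqP; apply: contraNT hi => /hgs.
        by rewrite inE => /andP [].
      have gb : forall i, gam i = beta i.
        move=> i; apply/eqP; rewrite -subr_eq0; apply/eqP.
        apply: (hind (fun i => gam i - beta i)).
        - by move=> j hj; rewrite gz // hbz // subrr.
        - by rewrite sumrB hg1 hb1 subrr.
        - rewrite (eq_bigr (fun i => gam i *: x i - beta i *: x i)); last first.
            by move=> j _; rewrite scalerBl.
          by rewrite sumrB -hgc -hbc subrr.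
      apply/fintype.subsetP => i; rewrite hA -gb => /hgs.
      by rewrite inE => /andP [].
    have card_le : (#|B| <= 3)%N by case: (Hsz B BF) => /andP [].
    case: (eqVneq #|B| 3) => [B3|B3].
      by exfalso; apply: noT; exists B => //; split.
    have EB : B = A.
      apply/eqP; rewrite eq_sym eqEcard sAB /= EA cards2 ab /=.
      by move: card_le B3; case: #|B| => [|[|[|[|?]]]].
    rewrite EB in hBe.
    have [om [hos hom0 ho1 hoc]] := weights_of_hull hBe.
    have oz := supp_zero hos.
    have so : om a + om b = 1 by rewrite -ho1 (sum_supp oz) EA sum_set2.
    rewrite (sum_suppZ x oz) EA sum_set2 in hoc.
    exfalso; apply: hk; exists (beta b + (om b - beta b) / e).
    have en : e != 0 by rewrite gt_eqF.
    have hoa : om a = 1 - om b by lra.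
    have hba : beta a = 1 - beta b by lra.
    have h0 := congr1 (fun p : pt => p r0 i0) hoc.
    have h1 := congr1 (fun p : pt => p r0 i1) hoc.
    have c0 := congr1 (fun p : pt => p r0 i0) cab.
    have c1 := congr1 (fun p : pt => p r0 i1) cab.
    rewrite /= !mxE in h0 h1 c0 c1.
    apply: ptP; rewrite !mxE.
      have hy : y r0 i0 = c r0 i0 + (om a * x a r0 i0 + om b * x b r0 i0 - c r0 i0) / e.
        by rewrite -h0; field.
      by rewrite -/y hy c0 hoa hba; field.
    have hy : y r0 i1 = c r0 i1 + (om a * x a r0 i1 + om b * x b r0 i1 - c r0 i1) / e.
      by rewrite -h1; field.
    by rewrite -/y hy c1 hoa hba; field.
    exact: ab.
- by exfalso; apply: noT; exists A.
Qed.

End Final.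

Theorem theorem1 (R : realType) (n : nat) (x : 'I_n -> 'rV[R]_2)
    (F : {set {set 'I_n}}) :
  (0 < n)%N -> injective x -> farthest_delaunay x F ->
  forall s : 'rV[R]_2,
    minpower_centre x s <->
    exists2 A, A \in F &
      relint (image_set (T x) (face_set x A)) s /\ VD x A s.
Proof.
move=> n0 injx HF s; split; first exact: (main_dir n0 injx HF).
case=> A AF [[hrel _] hVD].
case: hrel => c [hc hs].
have [beta [hbs hb0 hb1 hbc]] := weights_of_hull hc.
apply: (suff_min n0 (c := c) (nu := beta)) => //.
by move=> i /hbs /hVD.
Qed.
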